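(* The projective Fraïssé limit $\mathbb G$ is pointwise self-isomorphic: for every vertex $x$ of $\mathbb G$ and every neighborhood $U$ of $x$ there is a topological subgraph $V$ of $\mathbb G$ with $x\in V\subseteq U$ that is isomorphic to $\mathbb G$.
   Context: A graph is a pair $A=(V(A),E(A))$ with $E(A)\subseteq V(A)^2$ reflexive and symmetric; a topological graph additionally has $V$ compact, second countable, zero-dimensional and $E$ closed; subgraphs carry the induced edge relation. Epimorphisms are (continuous) edge-preserving maps surjective on vertices and edges; an isomorphism is an injective epimorphism. A vertex set $S$ is disconnected if it splits into two nonempty closed subsets with no edges between them; otherwise connected; components are maximal connected subsets. An epimorphism $f\colon A\to B$ is confluent if for every connected $Q\subseteq V(B)$ each component $C$ of $f^{-1}(Q)$ has $f(C)=Q$. $\mathbb G$ is the projective Fraïssé limit of the class of finite connected graphs with confluent epimorphisms: the unique topological graph such that (1) every finite connected graph is a confluent epimorphic image of $\mathbb G$; (2) for finite connected $A,B$ and confluent epimorphisms $f\colon\mathbb G\to A$, $g\colon B\to A$ there is a confluent epimorphism $h\colon\mathbb G\to B$ with $f=g\circ h$; (3) for each $\varepsilon>0$ some confluent epimorphism from $\mathbb G$ onto a finite connected graph has all point-preimages of diameter $<\varepsilon$. *)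

(* Defs.v *)
From HB Require Import structures.
From mathcomp Require Import all_boot all_order all_algebra.
From mathcomp Require Import all_classical all_reals all_analysis.
Set Implicit Arguments. Unset Strict Implicit. Unset Printing Implicit Defensive.
Import Order.TTheory GRing.Theory Num.Theory.
Local Open Scope classical_set_scope.
Local Open Scope ring_scope.

(* Graph-theoretic connectedness of a vertex set S, relative to a notion
   [clo] of closed sets of the ambient vertex space (the topology's closed
   sets for topological graphs, all sets for finite (discrete) graphs).
   "Closed subsets" of S are taken relative to S. *)
Definition gdisconnected {X : Type} (clo : set X -> Prop)
  (E : X -> X -> Prop) (S : set X) : Prop :=
  exists A B : set X,
    [/\ A `|` B = S, A `&` B = set0, A !=set0 & B !=set0] /\
    [/\ (exists C, clo C /\ A = C `&` S),
        (exists D, clo D /\ B = D `&` S)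
      & forall a b, A a -> B b -> ~ E a b].

Definition gconnected {X : Type} (clo : set X -> Prop)
  (E : X -> X -> Prop) (S : set X) : Prop := ~ gdisconnected clo E S.

Definition gcomponent {X : Type} (clo : set X -> Prop)
  (E : X -> X -> Prop) (S C : set X) : Prop :=
  [/\ C `<=` S, gconnected clo E C &
      forall D, C `<=` D -> D `<=` S -> gconnected clo E D -> D = C].

Definition epi {X Y : Type} (EX : X -> X -> Prop) (EY : Y -> Y -> Prop)
  (f : X -> Y) : Prop :=
  [/\ (forall u v, EX u v -> EY (f u) (f v)),
      (forall y, exists x, f x = y)
    & (forall a b, EY a b -> exists u v, [/\ EX u v, f u = a & f v = b])].

Definition confluent {X Y : Type} (cloX : set X -> Prop) (EX : X -> X -> Prop)
  (cloY : set Y -> Prop) (EY : Y -> Y -> Prop) (f : X -> Y) : Prop :=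
  epi EX EY f /\
  forall Q : set Y, gconnected cloY EY Q ->
    forall C, gcomponent cloX EX (f @^-1` Q) C -> f @` C = Q.

Definition fin_closed (A : finType) : set A -> Prop := fun _ => True.

Definition fin_conn_graph (A : finType) (EA : rel A) : Prop :=
  [/\ (0 < #|A|)%N, reflexive EA, symmetric EA &
      gconnected (@fin_closed A) (fun a b => EA a b) setT].

Definition top_graph (T : topologicalType) (E : T -> T -> Prop) : Prop :=
  [/\ compact [set: T], @second_countable T & zero_dimensional T] /\
  [/\ closed [set p : T * T | E p.1 p.2],
      (forall x, E x x) & (forall x y, E x y -> E y x)].

Definition cont_fin {T : topologicalType} {A : finType} (f : T -> A) : Prop :=
  forall a : A, open (f @^-1` [set a]).

Definition conf_epi_fin {T : topologicalType} (E : T -> T -> Prop)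
  {A : finType} (EA : rel A) (f : T -> A) : Prop :=
  cont_fin f /\ confluent closed E (@fin_closed A) (fun a b => EA a b) f.

Definition is_Fraisse_limit {R : realType} (T : pseudoMetricType R)
  (E : T -> T -> Prop) : Prop :=
  [/\ top_graph E,
      (forall (A : finType) (EA : rel A), fin_conn_graph EA ->
         exists f : T -> A, conf_epi_fin E EA f),
      (forall (A B : finType) (EA : rel A) (EB : rel B),
         fin_conn_graph EA -> fin_conn_graph EB ->
         forall (f : T -> A) (g : B -> A),
         conf_epi_fin E EA f ->
         confluent (@fin_closed B) (fun a b => EB a b)
                   (@fin_closed A) (fun a b => EA a b) g ->
         exists h : T -> B, conf_epi_fin E EB h /\ f = g \o h)
    &
      (forall eps : R, 0 < eps ->
         exists (A : finType) (EA : rel A) (f : T -> A),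
           [/\ fin_conn_graph EA, conf_epi_fin E EA f &
               forall a p q, f p = a -> f q = a -> ball p eps q])].

Definition iso_onto_subgraph {T : topologicalType} (E : T -> T -> Prop)
  (V : set T) : Prop :=
  exists h : T -> T,
    [/\ continuous h, injective h, h @` setT = V,
        (forall u v, E u v -> E (h u) (h v)) &
        (forall a b, V a -> V b -> E a b ->
           exists u v, [/\ E u v, h u = a & h v = b])].

(* Main.v *)
Require Import Defs.
From HB Require Import structures.
From mathcomp Require Import all_boot all_order all_algebra.
From mathcomp Require Import all_classical all_reals all_analysis.
From mathcomp Require Import lra.
Import Order.TTheory GRing.Theory Num.Theory.
Local Open Scope classical_set_scope.
Local Open Scope ring_scope.
Set Implicit Arguments. Unset Strict Implicit. Unset Printing Implicit Defensive.

Section GenGraph.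
Context {X : Type} (clo : set X -> Prop) (E : X -> X -> Prop).

Lemma conn_sides S C D : gconnected clo E S -> clo C -> clo D ->
  S `<=` C `|` D -> S `&` C `&` D = set0 ->
  (forall a b, S a -> S b -> C a -> D b -> ~ E a b) -> S `<=` C \/ S `<=` D.
Proof.
move=> cS cC cD SCD SCD0 nE.
apply: contrapT => /not_orP[/existsNP[a /not_implyP[Sa nCa]] /existsNP[b /not_implyP[Sb nDb]]].
apply: cS; exists (C `&` S), (D `&` S); split; [split|split].
- apply/seteqP; split=> [z [[]|[]]|z Sz] //; have [] := SCD _ Sz; [left|right] => //.
- apply/seteqP; split=> // z [[Cz Sz] [Dz _]]; rewrite -SCD0; done.
- by exists b; split => //; have [] := SCD _ Sb.
- by exists a; split => //; have [] := SCD _ Sa.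
- by exists C.
- by exists D.
- by move=> u v [Cu Su] [Dv Sv]; apply: nE.
Qed.

Lemma conn_set0 : gconnected clo E set0.
Proof. move=> [A [B [[AB _ [a Aa] _] _]]]; have : (A `|` B) a by left.
by rewrite AB. Qed.

Lemma conn_set1 p : gconnected clo E [set p].
Proof.
move=> [A [B [[AB AB0 [a Aa] [b Bb]] _]]].
have : (A `|` B) a by left.
have : (A `|` B) b by right.
rewrite AB => /= bp ap; subst a b.
have : (A `&` B) p by [].
by rewrite AB0.
Qed.


Definition gsplit S P Q := [/\ P `|` Q = S, P `&` Q = set0,
  (exists C, clo C /\ P = C `&` S), (exists D, clo D /\ Q = D `&` S) &
  forall a b, P a -> Q b -> ~ E a b].

Lemma gdiscP S : gdisconnected clo E S ->
  exists P Q, [/\ gsplit S P Q, P !=set0 & Q !=set0].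
Proof.
move=> [P [Q [[PQ PQ0 nP nQ] [hC hD nE]]]]; exists P, Q; split => //.
Qed.

Lemma conn_in_split Y S P Q : gconnected clo E Y -> Y `<=` S -> gsplit S P Q ->
  Y `<=` P \/ Y `<=` Q.
Proof.
move=> cY YS [PQ PQ0 [C [cC PC]] [D [cD QD]] nE].
have inS z : S z -> (C z /\ P z) \/ (D z /\ Q z).
  move=> Sz; have : (P `|` Q) z by rewrite PQ.
  by case=> [Pz|Qz]; [left; split => //; move: Pz; rewrite PC => -[] | right; split => //; move: Qz; rewrite QD => -[]].
have PCS z : S z -> C z -> P z by move=> Sz Cz; rewrite PC.
have QDS z : S z -> D z -> Q z by move=> Sz Dz; rewrite QD.
have [] := @conn_sides Y C D cY cC cD.
- by move=> y /YS /inS [[]|[]]; [left|right].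
- apply/seteqP; split => // y [[Yy Cy] Dy].
  have : (P `&` Q) y by split; [apply: PCS (YS _ Yy) Cy | apply: QDS (YS _ Yy) Dy].
  by rewrite PQ0.
- by move=> a b Ya Yb Ca Db; apply: nE; [apply: PCS (YS _ Ya) Ca | apply: QDS (YS _ Yb) Db].
- by move=> YC; left => y Yy; apply: PCS (YS _ Yy) (YC _ Yy).
- by move=> YD; right => y Yy; apply: QDS (YS _ Yy) (YD _ Yy).
Qed.

Lemma conn_union A B : gconnected clo E A -> gconnected clo E B ->
  A `&` B !=set0 -> gconnected clo E (A `|` B).
Proof.
move=> cA cB [z [Az Bz]] /gdiscP [P [Q [sp [p Pp] [q Qq]]]].
have [PQ PQ0 _ _ _] := sp.
have sA : A `<=` A `|` B by move=> ? ?; left.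
have sB : B `<=` A `|` B by move=> ? ?; right.
have disj y : P y -> Q y -> False by move=> Py Qy; have : (P `&` Q) y by []; rewrite PQ0.
have PQs y : (A `|` B) y -> P y \/ Q y by rewrite -PQ.
have QsAB : Q `<=` A `|` B by rewrite -PQ => ? ?; right.
have PsAB : P `<=` A `|` B by rewrite -PQ => ? ?; left.
have [AP|AQ] := conn_in_split cA sA sp; have [BP|BQ] := conn_in_split cB sB sp.
- by apply: (disj q) => //; case: (QsAB _ Qq) => [/AP|/BP].
- by apply: (disj z); [apply: AP | apply: BQ].
- by apply: (disj z); [apply: BP | apply: AQ].
- by apply: (disj p) => //; case: (PsAB _ Pp) => [/AQ|/BQ].
Qed.

Lemma conn_pair a b : E a b -> E b a -> gconnected clo E [set a; b].
Proof.
move=> Eab Eba /gdiscP [P [Q [[PQ PQ0 _ _ nE] [p Pp] [q Qq]]]].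
have disj y : P y -> Q y -> False by move=> Py Qy; have : (P `&` Q) y by []; rewrite PQ0.
have PQs y : y = a \/ y = b -> P y \/ Q y.
  by move=> h; change ((P `|` Q) y); rewrite PQ.
have sP y : P y -> y = a \/ y = b.
  by move=> Py; have : (P `|` Q) y; [left | rewrite PQ].
have sQ y : Q y -> y = a \/ y = b.
  by move=> Qy; have : (P `|` Q) y; [right | rewrite PQ].
have [Pa|Qa] := PQs a (or_introl erefl); have [Pb|Qb] := PQs b (or_intror erefl).
- by case: (sQ _ Qq) => qe; subst q; [apply: (disj a) | apply: (disj b)].
- exact: nE Pa Qb Eab.
- exact: nE Pb Qa Eba.
- by case: (sP _ Pp) => pe; subst p; [apply: (disj a) | apply: (disj b)].
Qed.

Lemma edge_between K C D : gconnected clo E K -> clo C -> clo D ->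
  K `<=` C `|` D -> K `&` C `&` D = set0 -> K `&` C !=set0 -> K `&` D !=set0 ->
  exists a b, [/\ K a, K b, C a, D b & E a b].
Proof.
move=> cK cC cD KCD K0 [c [Kc Cc]] [d [Kd Dd]].
apply: contrapT => nex.
have nE : forall a b, K a -> K b -> C a -> D b -> ~ E a b.
  by move=> a b Ka Kb Ca Db Eab; apply: nex; exists a, b.
have [KC|KD] := conn_sides cK cC cD KCD K0 nE.
- have : (K `&` C `&` D) d := conj (conj Kd (KC _ Kd)) Dd.
  by rewrite K0.
- have : (K `&` C `&` D) c := conj (conj Kc Cc) (KD _ Kc).
  by rewrite K0.
Qed.

Definition gcomp S p : set X := fun z =>
  exists Y, [/\ Y `<=` S, gconnected clo E Y, Y p & Y z].

Lemma comp_sub S p : gcomp S p `<=` S.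
Proof. by move=> z [Y [YS _ _ Yz]]; apply: YS. Qed.

Lemma comp_max S p Y : Y `<=` S -> gconnected clo E Y -> Y p -> Y `<=` gcomp S p.
Proof. by move=> YS cY Yp z Yz; exists Y. Qed.

Lemma comp_self S p : S p -> gcomp S p p.
Proof. by move=> Sp; exists [set p]; split => //; [move=> ? -> | apply: conn_set1]. Qed.

Lemma comp_conn S p : gconnected clo E (gcomp S p).
Proof.
move=> /gdiscP [P [Q [sp [a Pa] [b Qb]]]].
have [PQ PQ0 _ _ _] := sp.
have disj y : P y -> Q y -> False by move=> Py Qy; have : (P `&` Q) y by []; rewrite PQ0.
have Pc : P `<=` gcomp S p by rewrite -PQ => ? ?; left.
have Qc : Q `<=` gcomp S p by rewrite -PQ => ? ?; right.
have [Y [YS cY Yp Ya]] := Pc _ Pa.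
have [Z [ZS cZ Zp Zb]] := Qc _ Qb.
have Ysub : Y `<=` gcomp S p by apply: comp_max.
have Zsub : Z `<=` gcomp S p by apply: comp_max.
have [YP|YQ] := conn_in_split cY Ysub sp; have [ZP|ZQ] := conn_in_split cZ Zsub sp.
- by apply: (disj b) => //; apply: ZP.
- by apply: (disj p); [apply: YP | apply: ZQ].
- by apply: (disj p); [apply: ZP | apply: YQ].
- by apply: (disj a) => //; apply: YQ.
Qed.

Lemma comp_gcomponent S p : S p -> gcomponent clo E S (gcomp S p).
Proof.
move=> Sp; split; [exact: comp_sub | exact: comp_conn |].
move=> D cD DS cDc; apply/seteqP; split => //.
apply: comp_max => //; apply: cD; exact: comp_self.
Qed.

Lemma gcomponent_meet S K Y : gcomponent clo E S K -> Y `<=` S ->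
  gconnected clo E Y -> Y `&` K !=set0 -> Y `<=` K.
Proof.
move=> [KS cK mK] YS cY YK.
have -> : K = K `|` Y.
  apply: esym; apply: mK; [by move=> ? ?; left | by move=> z [/KS|/YS] |].
  by apply: conn_union => //; rewrite setIC.
by move=> ? ?; right.
Qed.

Lemma gcomponent_nonempty S K z : gcomponent clo E S K -> S z -> K !=set0.
Proof.
move=> [KS cK mK] Sz; apply: contrapT => nK.
have K0 : K = set0 by apply/seteqP; split => // y Ky; apply: nK; exists y.
have zS : [set z] `<=` S by move=> ? ->.
have Kz : K `<=` [set z] by rewrite K0.
have h := mK [set z] Kz zS (@conn_set1 z).
by apply: nK; exists z; rewrite -h.
Qed.

End GenGraph.

Section GenGraph2.
Context {X Y : Type} (clo : set X -> Prop) (E : X -> X -> Prop)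
  (cloY : set Y -> Prop) (EY : Y -> Y -> Prop).

Lemma conn_image (f : X -> Y) S :
  (forall Z, cloY Z -> clo (f @^-1` Z)) -> (forall u v, E u v -> EY (f u) (f v)) ->
  gconnected clo E S -> gconnected cloY EY (f @` S).
Proof.
move=> hclo hE cS /gdiscP [P [Q [[PQ PQ0 [C [cC PC]] [D [cD QD]] nE] [p Pp] [q Qq]]]].
apply: cS; exists (f @^-1` C `&` S), (f @^-1` D `&` S); split; [split|split].
- apply/seteqP; split => [z [[]|[]] //|z Sz].
  have : (P `|` Q) (f z) by rewrite PQ; exists z.
  by case; [rewrite PC => -[]; left | rewrite QD => -[]; right].
- apply/seteqP; split => // z [[Cz Sz] [Dz _]].
  have : (P `&` Q) (f z) by split; [rewrite PC | rewrite QD]; split => //; exists z.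
  by rewrite PQ0.
- have : (P `|` Q) p by left.
  rewrite PQ; case=> w Sw fw; exists w; split => //.
  by move: Pp; rewrite PC -fw => -[].
- have : (P `|` Q) q by right.
  rewrite PQ; case=> w Sw fw; exists w; split => //.
  by move: Qq; rewrite QD -fw => -[].
- by exists (f @^-1` C); split => //; apply: hclo.
- by exists (f @^-1` D); split => //; apply: hclo.
- move=> u v [Cu Su] [Dv Sv] Euv; apply: (nE (f u) (f v)); last exact: hE.
  + by rewrite PC; split => //; exists u.
  + by rewrite QD; split => //; exists v.
Qed.

Lemma conn_preimage_inj (f : X -> Y) S :
  (forall Z, cloY Z) -> injective f -> (forall a b, EY (f a) (f b) -> E a b) ->
  gconnected cloY EY (f @` S) -> gconnected clo E S.
Proof.
move=> hclo finj hE cS /gdiscP [P [Q [[PQ PQ0 [C [cC PC]] [D [cD QD]] nE] [p Pp] [q Qq]]]].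
have disj y : P y -> Q y -> False by move=> Py Qy; have : (P `&` Q) y by []; rewrite PQ0.
apply: cS; exists (f @` P), (f @` Q); split; [split|split].
- by rewrite -image_setU PQ.
- apply/seteqP; split => // z [[u Pu <-] [v Qv]] /finj uv; subst v.
  exact: disj Pu Qv.
- by exists (f p), p.
- by exists (f q), q.
- exists (f @` P); split => //; apply/seteqP; split => [z Pz|z []//].
  by split => //; move: Pz => [u Pu <-]; exists u => //; rewrite -PQ; left.
- exists (f @` Q); split => //; apply/seteqP; split => [z Qz|z []//].
  by split => //; move: Qz => [u Qu <-]; exists u => //; rewrite -PQ; right.
- by move=> _ _ [u Pu <-] [v Qv <-] /hE; apply: nE.
Qed.

End GenGraph2.

Section Conf.
Context {X Y : Type} (cloX : set X -> Prop) (EX : X -> X -> Prop)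
  (cloY : set Y -> Prop) (EY : Y -> Y -> Prop).

Lemma edge_lift_comp (f : X -> Y) Q V a b :
  confluent cloX EX cloY EY f -> (forall Z, cloX (f @^-1` Z)) ->
  (forall u, EX u u) -> (forall c d, EY c d -> EY d c) ->
  gconnected cloY EY Q -> gcomponent cloX EX (f @^-1` Q) V ->
  Q a -> Q b -> EY a b ->
  exists u v, [/\ V u, V v, EX u v, f u = a & f v = b].
Proof.
move=> [fe fc] hclo refl sym cQ cV Qa Qb Eab.
have fV := fc Q cQ V cV.
have : (f @` V) a by rewrite fV.
case=> p Vp fpa.
have [ab|ab] := pselect (a = b).
  by subst b; exists p, p; split.
have cQ2 : gconnected cloY EY [set a; b] by apply: conn_pair => //; apply: sym.
have Q2p : (f @^-1` [set a; b]) p by left.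
have cL := comp_gcomponent cloX EX Q2p.
have fL := fc _ cQ2 _ cL.
have LV : gcomp cloX EX (f @^-1` [set a; b]) p `<=` V.
  apply: (gcomponent_meet cV).
  - by move=> z Lz; case: (comp_sub Lz) => /= ->.
  - exact: comp_conn.
  - by exists p; split => //; apply: comp_self.
have : (f @` gcomp cloX EX (f @^-1` [set a; b]) p) b by rewrite fL; right.
case=> w Lw fwb.
have [_ cLc _] := cL.
have [] := @edge_between _ cloX EX (gcomp cloX EX (f @^-1` [set a; b]) p)
  (f @^-1` [set a]) (f @^-1` [set b]) cLc (hclo _) (hclo _).
- by move=> z Lz; case: (comp_sub Lz) => /= ->; [left|right].
- apply/seteqP; split => // z [[_ /= ->]] /= bb; exact: ab.
- by exists p; split => //; apply: comp_self.
- by exists w.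
move=> u [v [Lu Lv fu fv Euv]].
by exists u, v; split => //; apply: LV.
Qed.

End Conf.

Section Factor.
Context {X Y Z : Type} (cloX : set X -> Prop) (EX : X -> X -> Prop)
  (cloY : set Y -> Prop) (EY : Y -> Y -> Prop)
  (cloZ : set Z -> Prop) (EZ : Z -> Z -> Prop).

Lemma factor_confluent (k : X -> Y) (Psi : X -> Z) (r : Y -> Z) :
  confluent cloX EX cloY EY k -> confluent cloX EX cloZ EZ Psi ->
  (forall t, Psi t = r (k t)) -> (forall W, cloY W -> cloX (k @^-1` W)) ->
  confluent cloY EY cloZ EZ r.
Proof.
move=> [[ke ks kE] kc] [[pe ps pE] pc] Pr hclo.
split; first split.
- move=> c c' /kE [u [v [Euv <- <-]]]; rewrite -!Pr; exact: pe.
- by move=> z; have [t <-] := ps z; exists (k t); rewrite Pr.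
- move=> a b /pE [u [v [Euv <- <-]]]; exists (k u), (k v); split; rewrite ?Pr //.
  exact: ke.
move=> Q cQ Dc cD.
have [[d Dd]|nD] := pselect (Dc !=set0); last first.
  have Q0 : Q = set0.
    apply/seteqP; split => // q Qq; apply: nD.
    have [t Ptq] := ps q.
    apply: (gcomponent_nonempty cD (z := k t)) => /=; rewrite -Pr Ptq //.
  rewrite Q0; apply/seteqP; split => // z [y Dy _]; apply: nD; by exists y.
have [p kpd] := ks d.
have DcS : Dc `<=` r @^-1` Q by case: cD.
have Pp : (Psi @^-1` Q) p by rewrite /= Pr kpd; apply: DcS.
have cC := comp_gcomponent cloX EX Pp.
have PC := pc Q cQ _ cC.
have kCD : k @` gcomp cloX EX (Psi @^-1` Q) p `<=` Dc.
  apply: (gcomponent_meet cD).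
  - by move=> _ [c Cc <-]; have := comp_sub Cc; rewrite /= Pr.
  - by apply: (conn_image (clo:=cloX) (E:=EX)) => //; apply: comp_conn.
  - by exists d; split => //; exists p => //; apply: comp_self.
apply/seteqP; split; first by move=> _ [y /DcS Qy <-].
move=> q; rewrite -PC => -[c Cc <-]; exists (k c); last by rewrite Pr.
by apply: kCD; exists c.
Qed.

End Factor.

Notation fconf EA EB g := (confluent (@fin_closed _) (fun a b => EA a b)
  (@fin_closed _) (fun a b => EB a b) g).

Section Surgery.
Context (C : finType) (EC : rel C) (D : finType) (ED : rel D) (iota : D -> C)
  (C' : finType) (EC' : rel C') (r' : C' -> D).
Hypothesis iota_inj : injective iota.
Hypothesis EDiff : forall a b, ED a b = EC (iota a) (iota b).
Hypothesis r'conf : fconf EC' ED r'.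
Hypothesis gC : fin_conn_graph EC.
Hypothesis gD : fin_conn_graph ED.
Hypothesis gC' : fin_conn_graph EC'.

Definition notD (c : C) := ~~ [exists d, iota d == c].
Definition Out := {c : C | notD c}.
Definition C2 := (Out + C')%type.
Definition E2 : rel C2 := fun z w =>
  match z, w with
  | inl a, inl b => EC (val a) (val b)
  | inr e, inr e' => EC' e e'
  | inl a, inr e => EC (val a) (iota (r' e))
  | inr e, inl a => EC (iota (r' e)) (val a)
  end.
Definition s2 (z : C2) : C := match z with inl a => val a | inr e => iota (r' e) end.

Lemma s2_range z : (exists d, iota d = s2 z) <-> (exists e, z = inr e).
Proof.
split; last by move=> [e ->]; exists (r' e).
case: z => [[c nc]|e] /= [d dc]; last by exists e.
by move: nc; rewrite /notD; case/existsP; exists d; apply/eqP.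
Qed.

Lemma E2_out z w : (forall e e', ~ (z = inr e /\ w = inr e')) -> E2 z w = EC (s2 z) (s2 w).
Proof. by case: z => [a|e]; case: w => [b|e'] //= h; have [] := h e e'. Qed.

Lemma inOut c : ~ (exists d, iota d = c) -> notD c.
Proof. by move=> h; apply/negP => /existsP [d /eqP dc]; apply: h; exists d. Qed.

Let symC : symmetric EC. Proof. by case: gC. Qed.
Let symC' : symmetric EC'. Proof. by case: gC'. Qed.
Let reflC : reflexive EC. Proof. by case: gC. Qed.
Let reflC' : reflexive EC'. Proof. by case: gC'. Qed.
Let symD : symmetric ED. Proof. by case: gD. Qed.

Lemma E2_sym : symmetric E2.
Proof. by case=> [a|e] [b|e'] /=; [exact: symC | exact: symC | exact: symC | exact: symC']. Qed.

Lemma E2_refl : reflexive E2.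
Proof. by case=> [a|e] /=; [exact: reflC | exact: reflC']. Qed.

Lemma s2_epi : epi (fun a b => E2 a b) (fun a b => EC a b) s2.
Proof.
have [[r'E r's r'ES] _] := r'conf.
split.
- case=> [a|e] [b|e'] //= h; rewrite -EDiff; exact: r'E.
- move=> c; have [[d dc]|nd] := pselect (exists d, iota d = c).
    by have [e red] := r's d; exists (inr e); rewrite /= red.
  by exists (inl (exist _ c (inOut nd))).
- move=> c c' Ecc'.
  have [[d dc]|nd] := pselect (exists d, iota d = c);
  have [[d' dc']|nd'] := pselect (exists d, iota d = c').
  + subst c c'; rewrite -EDiff in Ecc'.
    have [e [e' [Ee <- <-]]] := r'ES _ _ Ecc'.
    by exists (inr e), (inr e').
  + subst c; have [e red] := r's d.
    exists (inr e), (inl (exist _ c' (inOut nd'))); split => //=; rewrite ?red //.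
  + subst c'; have [e red] := r's d'.
    exists (inl (exist _ c (inOut nd))), (inr e); split => //=; rewrite ?red //.
  + by exists (inl (exist _ c (inOut nd))), (inl (exist _ c' (inOut nd'))).
Qed.

Lemma s2_conf : fconf E2 EC s2.
Proof.
have [[r'E r's r'ES] r'c] := r'conf.
have [s2E s2s s2ES] := s2_epi.
split; first exact: s2_epi.
move=> Q cQ L cL.
have [LS cLc mL] := cL.
have [[z0 Lz0]|nL] := pselect (L !=set0); last first.
  have Q0 : Q = set0.
    apply/seteqP; split => // q Qq; apply: nL.
    have [z szq] := s2s q.
    by apply: (gcomponent_nonempty cL (z := z)); rewrite /= szq.
  rewrite Q0; apply/seteqP; split => // t [y Ly _]; apply: nL; by exists y.
have addL z w : L z -> Q (s2 w) -> E2 z w -> L w.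
  move=> Lz Qw Ezw.
  have cp : gconnected (@fin_closed _) (fun a b => E2 a b) [set z; w].
    by apply: conn_pair => //; rewrite E2_sym.
  have := gcomponent_meet cL _ cp; apply.
  - by move=> y [] /= ->; [apply: LS | ].
  - by exists z; split => //; left.
  - by right.
have clos q q' : (s2 @` L) q -> Q q' -> EC q q' -> (s2 @` L) q'.
  move=> [z Lz <-] Qq' Eqq'.
  have Qz : Q (s2 z) by apply: LS.
  have [[d' dq']|nd'] := pselect (exists d, iota d = q'); last first.
    pose w := inl (exist _ q' (inOut nd')) : C2.
    exists w => //; apply: (addL z) => //.
    by rewrite E2_out //; case: z {Lz Qz Eqq'} => [a|e] e1 e2 [].
  subst q'.
  case: z Lz Qz Eqq' => [a|e] Lz Qz Eqq'.
    have [e' red'] := r's d'.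
    exists (inr e'); last by rewrite /= red'.
    by apply: (addL (inl a)) => //=; rewrite red'.
  rewrite /= -EDiff in Eqq'.
  have Sd : (iota @^-1` Q) (r' e) by [].
  pose Qi := gcomp (@fin_closed _) (fun a b => ED a b) (iota @^-1` Q) (r' e).
  have cQi : gcomponent (@fin_closed _) (fun a b => ED a b) (iota @^-1` Q) Qi
    by apply: comp_gcomponent.
  have Qid' : Qi d'.
    apply: (comp_max (Y := [set r' e; d'])); [ | | by left | by right].
    - by move=> y [] /= ->.
    - by apply: conn_pair => //; rewrite symD.
  have Se : (r' @^-1` Qi) e by apply: comp_self.
  pose M := gcomp (@fin_closed _) (fun a b => EC' a b) (r' @^-1` Qi) e.
  have cM : gcomponent (@fin_closed _) (fun a b => EC' a b) (r' @^-1` Qi) M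
    by apply: comp_gcomponent.
  have [_ cQic _] := cQi.
  have rM := r'c Qi cQic M cM.
  have : (r' @` M) d' by rewrite rM.
  case=> e' Me' red'.
  exists (inr e'); last by rewrite /= red'.
  have sub : (inr @` M) `<=` L.
    apply: (gcomponent_meet cL).
    - by move=> _ [m Mm <-] /=; exact: comp_sub (comp_sub Mm).
    - apply: (conn_image (clo := @fin_closed _) (E := fun a b => EC' a b)) => //.
      by case: cM.
    - by exists (inr e); split => //; exists e => //; apply: comp_self.
  by apply: sub; exists e'.
apply/seteqP; split; first by move=> _ [y /LS Qy <-].
move=> q Qq; apply: contrapT => nq.
have [] := @edge_between _ (@fin_closed _) (fun a b => EC a b) Q (s2 @` L) (~` (s2 @` L))
  cQ I I.
- by move=> y Qy; have [h|h] := pselect ((s2 @` L) y); [left|right].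
- by apply/seteqP; split => [y [[_ h1] h2]|//]; exact: h2 h1.
- by exists (s2 z0); split; [exact: LS | exists z0].
- by exists q.
move=> a [b [Qa Qb La nLb Eab]].
by apply: nLb; apply: (clos a).
Qed.

Lemma C2_graph : fin_conn_graph E2.
Proof.
have [[r'E r's r'ES] r'c] := r'conf.
have [gC'0 _ _ cC'] := gC'.
have [e0 _] := card_gt0P gC'0.
split.
- by apply/card_gt0P; exists (inr e0).
- exact: E2_refl.
- exact: E2_sym.
pose L := gcomp (@fin_closed _) (fun a b => E2 a b) setT (inr e0).
have cL : gcomponent (@fin_closed _) (fun a b => E2 a b) setT L by apply: comp_gcomponent.
have cL' : gcomponent (@fin_closed _) (fun a b => E2 a b) (s2 @^-1` setT) L by rewrite preimage_setT.
have [_ _ _ cQ] := gC.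
have sL := (proj2 s2_conf) _ cQ _ cL'.
have -> : [set: C2] = L; last by case: cL.
apply/seteqP; split => // -[a|e] _.
- have : (s2 @` L) (val a) by rewrite sL.
  case=> -[b|e] Lb /= h.
    by have -> : a = b by apply: val_inj.
  by move: (valP a); rewrite /notD; case/existsP; exists (r' e); apply/eqP.
- have sub : (inr @` setT) `<=` L.
    apply: (gcomponent_meet cL) => //.
    + apply: (conn_image (clo := @fin_closed _) (E := fun a b => EC' a b)) => //.
    + by exists (inr e0); split; [exists e0 | apply: comp_self].
  by apply: sub; exists e.
Qed.

End Surgery.

Section Restrict.
Context (C3 : finType) (E3 : rel C3) (C2 : finType) (E2 : rel C2)
  (D2 : finType) (ED2 : rel D2) (i2 : D2 -> C2) (r : C3 -> C2) (c0 : C3) (d0 : D2).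
Hypothesis i2_inj : injective i2.
Hypothesis ED2iff : forall a b, ED2 a b = E2 (i2 a) (i2 b).
Hypothesis rconf : fconf E3 E2 r.
Hypothesis gD2 : fin_conn_graph ED2.
Hypothesis gC3 : fin_conn_graph E3.
Hypothesis gC2 : fin_conn_graph E2.
Hypothesis rc0 : r c0 = i2 d0.

Definition Kc := gcomp (@fin_closed _) (fun a b => E3 a b) (r @^-1` range i2) c0.
Definition DK := {c : C3 | `[< Kc c >]}.
Definition EK : rel DK := fun a b => E3 (val a) (val b).
Definition pre (y : C2) : D2 := if [pick d | i2 d == y] is Some d then d else d0.
Definition rho (c : DK) : D2 := pre (r (val c)).

Lemma Kc_sub c : Kc c -> exists d, i2 d = r c.
Proof. by move=> Kcc; have [d _ h] := comp_sub Kcc; exists d. Qed.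

Lemma i2pre y : (exists d, i2 d = y) -> i2 (pre y) = y.
Proof.
move=> [d dy]; rewrite /pre; case: pickP => [d' /eqP //|].
by move/(_ d); rewrite dy eqxx.
Qed.

Lemma i2rho c : i2 (rho c) = r (val c).
Proof. by apply: i2pre; apply: Kc_sub; apply/asboolP; exact: (valP c). Qed.

Lemma Kc_c0 : Kc c0.
Proof. by apply: comp_self; exists d0. Qed.

Lemma cRange : gconnected (@fin_closed _) (fun a b => E2 a b) (range i2).
Proof.
apply: (conn_image (clo := @fin_closed _) (E := fun a b => ED2 a b)) => //.
- by move=> u v; rewrite ED2iff.
- by case: gD2.
Qed.

Lemma cKc : gcomponent (@fin_closed _) (fun a b => E3 a b) (r @^-1` range i2) Kc.
Proof. by apply: comp_gcomponent; exists d0. Qed.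

Definition inK (c : C3) (h : Kc c) : DK := exist _ c (asboolT h).

Lemma val_image_Kc : val @` [set: DK] = Kc.
Proof.
apply/seteqP; split; first by move=> _ [c _ <-]; apply/asboolP; exact: (valP c).
by move=> c Kc_c; exists (inK Kc_c).
Qed.

Lemma DK_graph : fin_conn_graph EK.
Proof.
have [_ rf sy _] := gC3.
split.
- by apply/card_gt0P; exists (inK Kc_c0).
- by move=> a; rewrite /EK rf.
- by move=> a b; rewrite /EK sy.
- apply: (conn_preimage_inj (cloY := @fin_closed _) (EY := fun a b => E3 a b) (f := val)).
  + by [].
  + exact: val_inj.
  + by [].
  + by rewrite val_image_Kc; case: cKc.
Qed.

Lemma rho_conf : fconf EK ED2 rho.
Proof.
have [[rE rs rES] rc] := rconf.
have [_ rf3 sy3 _] := gC3.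
have [_ _ sy2 _] := gC2.
have rK := rc _ cRange _ cKc.
have rhosurj : forall q, exists c, rho c = q.
  move=> q; have : (r @` Kc) (i2 q) by rewrite rK; exists q.
  case=> y Ky ryq; exists (inK Ky); apply: i2_inj; by rewrite i2rho.
split; first split.
- by move=> a b /rE; rewrite -!i2rho -ED2iff.
- exact: rhosurj.
- move=> q q'; rewrite ED2iff => Eqq'.
  have sym2' : forall c d, E2 c d -> E2 d c by move=> c d; rewrite sy2.
  have [u [v [Ku Kv Euv ru rv]]] := edge_lift_comp rconf (fun _ => I) rf3
    sym2' cRange cKc (ex_intro2 _ _ q I erefl)
    (ex_intro2 _ _ q' I erefl) Eqq'.
  exists (inK Ku), (inK Kv); split => //; apply: i2_inj; by rewrite i2rho.
move=> Qs cQs M cM.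
have [MS cMc mM] := cM.
have [[m0 Mm0]|nM] := pselect (M !=set0); last first.
  have Q0 : Qs = set0.
    apply/seteqP; split => // q Qq; apply: nM.
    have [z szq] := rhosurj q.
    by apply: (gcomponent_nonempty cM (z := z)); rewrite /= szq.
  rewrite Q0; apply/seteqP; split => // t [y Ly _]; apply: nM; by exists y.
have cQs2 : gconnected (@fin_closed _) (fun a b => E2 a b) (i2 @` Qs).
  apply: (conn_image (clo := @fin_closed _) (E := fun a b => ED2 a b)) => //.
  by move=> u v; rewrite ED2iff.
have jM : gcomponent (@fin_closed _) (fun a b => E3 a b) (r @^-1` (i2 @` Qs)) (val @` M).
  split.
  - move=> _ [m Mm <-]; rewrite /= -i2rho; exists (rho m) => //; exact: MS.
  - by apply: (conn_image (clo := @fin_closed _) (E := fun a b => EK a b)).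
  - move=> W MW WS cW.
    have WK : W `<=` Kc.
      apply: (gcomponent_meet cKc) => //.
      + by move=> w /WS [d _ h]; exists d.
      + by exists (val m0); split; [apply: MW; exists m0 | apply/asboolP; exact: (valP m0)].
    pose W' := val @^-1` W : set DK.
    have imW : val @` W' = W.
      apply/seteqP; split; first by move=> _ [w Ww <-].
      by move=> w Ww; exists (inK (WK w Ww)).
    have cW' : gconnected (@fin_closed _) (fun a b => EK a b) W'.
      apply: (conn_preimage_inj (cloY := @fin_closed _) (EY := fun a b => E3 a b) (f := val)).
      + by [].
      + exact: val_inj.
      + by [].
      + by rewrite imW.
    have W'M : W' = M.
      apply: mM => //.
      - by move=> m Mm; apply: MW; exists m.
      - move=> w W'w; have := WS _ W'w; rewrite /= -i2rho => -[d Qd /i2_inj dw].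
        by rewrite /= -dw.
    by rewrite -imW W'M.
have rjM := rc _ cQs2 _ jM.
apply/seteqP; split; first by move=> _ [m Mm <-]; apply: MS.
move=> q Qq; have : (r @` (val @` M)) (i2 q) by rewrite rjM; exists q.
case=> _ [m Mm <-] h; exists m => //; apply: i2_inj; by rewrite i2rho.
Qed.

End Restrict.

Lemma eps_small (R : realType) (e : R) : 0 < e -> exists n : nat, (n.+1%:R)^-1 < e.
Proof.
move=> e0; exists (Num.truncn e^-1).
rewrite invf_plt ?unfold_in//= ?ltr0n//.
by rewrite -truncn_le_nat.
Qed.

Section Top.
Context {R : realType} {T : pseudoMetricType R}.

Lemma cont_fin_open (A : finType) (f : T -> A) (Z : set A) :
  cont_fin f -> open (f @^-1` Z).
Proof.
move=> cf.
have -> : f @^-1` Z = \bigcup_(a in Z) (f @^-1` [set a]).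
  apply/seteqP; split => [t Zt|t [a Za /= ->]] //; by exists (f t).
by apply: bigcup_open => a _; apply: cf.
Qed.

Lemma cont_fin_closed (A : finType) (f : T -> A) (Z : set A) :
  cont_fin f -> closed (f @^-1` Z).
Proof.
move=> cf; rewrite -openC.
have -> : ~` (f @^-1` Z) = f @^-1` (~` Z) by [].
exact: cont_fin_open.
Qed.

Lemma gcomponent_closed (E : T -> T -> Prop) S K :
  closed S -> gcomponent closed E S K -> closed K.
Proof.
move=> cS [KS cK mK].
have clS : closure K `<=` S.
  by move=> z /(closureS KS); rewrite -(proj1 (closure_id S) cS).
have cclK : gconnected closed E (closure K).
  move=> /gdiscP [P [Q [sp [p Pp] [q Qq]]]].
  have [PQ PQ0 [C [cC PC]] [D [cD QD]] nE] := sp.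
  have disj y : P y -> Q y -> False by move=> Py Qy; have : (P `&` Q) y by []; rewrite PQ0.
  have [KP|KQ] := conn_in_split cK (@subset_closure _ K) sp.
  - have KC : K `<=` C by move=> z /KP; rewrite PC => -[].
    have : closure K `<=` C.
      by move=> z /(closureS KC); rewrite -(proj1 (closure_id C) cC).
    move=> clC; apply: (disj q) => //.
    have clq : closure K q by move: Qq; rewrite QD => -[].
    by rewrite PC; split => //; apply: clC.
  - have KD : K `<=` D by move=> z /KQ; rewrite QD => -[].
    have : closure K `<=` D.
      by move=> z /(closureS KD); rewrite -(proj1 (closure_id D) cD).
    move=> clD; apply: (disj p) => //.
    have clp : closure K p by move: Pp; rewrite PC => -[].
    by rewrite QD; split => //; apply: clD.
have := mK _ (@subset_closure _ K) clS cclK.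
by move=> h; apply/closure_id; rewrite h.
Qed.

Lemma lebesgue_fin (A : finType) (f : T -> A) :
  compact [set: T] -> cont_fin f ->
  exists2 d : R, 0 < d & forall p q, ball p d q -> f p = f q.
Proof.
move=> cpt cf; apply: contrapT => nex.
have H : forall d : R, 0 < d -> exists p q, ball p d q /\ f p <> f q.
  move=> d d0; apply: contrapT => nH; apply: nex; exists d => // p q bpq.
  apply: contrapT => nf; apply: nH; by exists p, q.
pose B (d : R) := [set p | exists q, ball p d q /\ f p <> f q].
pose F := filter_from [set d : R | 0 < d] B.
have FF : Filter F.
  apply: filter_from_filter; first by exists 1; rewrite /= ltr01.
  move=> i j i0 j0; exists (Num.min i j); first by rewrite /= lt_min i0 j0.
  move=> p [q [bq nq]]; split; exists q; split => //;
    apply: (le_ball _ bq); rewrite ge_min lexx ?orbT //.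
have PF : ProperFilter F.
  apply: filter_from_proper => // d d0; have [p [q h]] := H d d0; exists p, q.
have [p [_ clp]] := cpt F PF filterT.
have [e e0 be] : exists2 e : R, 0 < e & ball p e `<=` f @^-1` [set f p].
  have : nbhs p (f @^-1` [set f p]) by apply: open_nbhs_nbhs; split; [apply: cf | ].
  by move/nbhs_ballP => [e e0 h]; exists e.
have e20 : 0 < e / 2 by rewrite divr_gt0.
have FB : F (B (e / 2)) by exists (e / 2).
have [p' [[q [bq nq]] bp']] := clp _ _ FB (nbhsx_ballx p (e / 2) e20).
apply: nq.
have fp' : f p' = f p.
  by apply: be; apply: (le_ball _ bp'); lra.
have fq : f q = f p.
  apply: be; rewrite [e]splitr; exact: ball_triangle bp' bq.
by rewrite fp' fq.
Qed.

Lemma sep_ball (p q : T) : zero_dimensional T ->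
  (forall e : R, 0 < e -> ball p e q) -> p = q.
Proof.
move=> zd h; apply/eqP; apply: contraT => pq.
have [U [[oU _] Up nUq]] := zd _ _ pq.
have : nbhs p U by apply: open_nbhs_nbhs.
by move/nbhs_ballP => [e e0 /(_ q (h e e0))].
Qed.


Lemma nested_inter (S : nat -> set T) : compact [set: T] ->
  (forall n, closed (S n)) -> (forall n, S n !=set0) -> (forall n, S n.+1 `<=` S n) ->
  exists p, forall n, S n p.
Proof.
move=> cpt cS nS dS.
have mono m n : (m <= n)%N -> S n `<=` S m.
  elim: n => [|n IH]; first by rewrite leqn0 => /eqP ->.
  rewrite leq_eqVlt => /orP [/eqP -> //|]; rewrite ltnS => /IH h z /dS; exact: h.
pose F := filter_from [set: nat] S.
have FF : Filter F.
  apply: filter_from_filter; first by exists 0%N.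
  move=> i j _ _; exists (maxn i j) => // z Sz; split; [apply: (mono i (maxn i j)) => //; exact: leq_maxl | apply: (mono j (maxn i j)) => //; exact: leq_maxr].
have PF : ProperFilter F by apply: filter_from_proper => n _; exact: nS.
have [p [_ clp]] := cpt F PF filterT.
exists p => n.
rewrite clusterE in clp.
have : closure (S n) p by apply: clp; exists n.
by rewrite -(proj1 (closure_id _) (cS n)).
Qed.

Lemma closed_edge_lim (E : T -> T -> Prop) :
  closed [set p : T * T | E p.1 p.2] -> forall a b,
  (forall e : R, 0 < e -> exists u v, [/\ ball a e u, ball b e v & E u v]) -> E a b.
Proof.
move=> cE a b h.
have : closure [set p : T * T | E p.1 p.2] (a, b).
  move=> B [[Qa Rb] [/= /nbhs_ballP [e1 e10 s1] /nbhs_ballP [e2 e20 s2]] sB].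
  have m0 : 0 < Num.min e1 e2 by rewrite lt_min e10 e20.
  have [u [v [bu bv Euv]]] := h _ m0.
  exists (u, v); split => //; apply: sB; split.
  - by apply: s1; apply: (le_ball _ bu); rewrite ge_min lexx.
  - by apply: s2; apply: (le_ball _ bv); rewrite ge_min lexx orbT.
by rewrite -(proj1 (closure_id _) cE).
Qed.

End Top.

Section Main.
Context {R : realType} {T : pseudoMetricType R} (E : T -> T -> Prop).
Hypothesis HF : is_Fraisse_limit E.
Context (V : set T) (x0 : T).
Hypothesis Vx0 : V x0.

Record stage : Type := Stage {
  sC : finType; sEC : rel sC; sPsi : T -> sC;
  sD : finType; sED : rel sD; siota : sD -> sC; sphi : T -> sD }.
Arguments sEC : clear implicits.
Arguments sPsi : clear implicits.
Arguments sED : clear implicits.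
Arguments siota : clear implicits.
Arguments sphi : clear implicits.

Definition basic (st : stage) : Prop :=
  [/\ fin_conn_graph (sEC st), conf_epi_fin E (sEC st) (sPsi st),
      fin_conn_graph (sED st), conf_epi_fin E (sED st) (sphi st) &
      [/\ injective (siota st),
      (forall a b, sED st a b = sEC st (siota st a) (siota st b)) &
      gcomponent closed E (sPsi st @^-1` range (siota st)) V]].

Definition meshV (st : stage) (e : R) :=
  forall p q, sPsi st p = sPsi st q -> V p -> V q -> ball p e q.
Definition meshT (st : stage) (e : R) :=
  forall p q, sphi st p = sphi st q -> ball p e q.

Definition snext (st st' : stage) := exists r : sC st' -> sC st,
  (forall t, sPsi st t = r (sPsi st' t)) /\
  (forall t, siota st (sphi st t) = r (siota st' (sphi st' t))).

Lemma next_meshV st st' e : snext st st' -> meshV st e -> meshV st' e.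
Proof. by move=> [r [h1 _]] m p q e' Vp Vq; apply: m => //; rewrite !h1 e'. Qed.

Lemma next_meshT st st' e : basic st -> snext st st' -> meshT st e -> meshT st' e.
Proof.
move=> [_ _ _ _ [inj _ _]] [r [_ h2]] m p q e'; apply: m; apply: inj.
by rewrite !h2 e'.
Qed.

Lemma tstep st e : basic st -> 0 < e ->
  exists st', [/\ basic st', snext st st' & meshT st' e].
Proof.
have [[[cpt _ zd] _] _ H2 H3] := HF.
case: st => C EC Psi D ED iota phi.
move=> [/= gC cPsi gD cphi [iinj EDiff cV]] e0.
have [d1 d10 hd1] := lebesgue_fin cpt (proj1 cphi).
have m0 : 0 < Num.min d1 e by rewrite lt_min d10 e0.
have [A' [EA' [k' [gA' ck' mk']]]] := H3 _ m0.
have [_ [[_ k's _] _]] := ck'.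
have [pre hpre] := choice k's.
pose r' a := phi (pre a).
have phir t : phi t = r' (k' t).
  rewrite /r'; apply: hd1; apply: (le_ball (e1 := Num.min d1 e)); first by rewrite ge_min lexx.
  by apply: (mk' (k' t)) => //; rewrite hpre.
have r'conf : fconf EA' ED r'.
  apply: (factor_confluent (k := k') (Psi := phi)) => //.
  - exact: (proj2 ck').
  - exact: (proj2 cphi).
  - by move=> W _; apply: cont_fin_closed; exact: (proj1 ck').
have sconf := s2_conf EDiff r'conf gC gD gA'.
have gC2 := C2_graph EDiff r'conf gC gD gA'.
have [Psi2 [cPsi2 PsiE]] := H2 _ _ _ _ gC gC2 Psi (s2 r') cPsi sconf.
exists (Stage (E2 EC EA' r') Psi2 EA' inr k'); split.
- split => //=; split => //=.
  + by move=> a b [].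
  + have -> : Psi2 @^-1` range inr = Psi @^-1` range iota; last by [].
    apply/seteqP; split => t /=.
    * move=> [a _ h]; have [d hd] := (proj2 (s2_range r' (Psi2 t))) (ex_intro _ a (esym h)).
      by exists d => //; rewrite PsiE.
    * rewrite PsiE => -[d _ h]; have [a ha] := proj1 (s2_range r' (Psi2 t)) (ex_intro _ d h).
      by exists a.
- exists (s2 r'); split => t; first by rewrite PsiE.
  by rewrite /= phir.
- move=> p q kpq; apply: (le_ball (e1 := Num.min d1 e)); first by rewrite ge_min lexx orbT.
  exact: mk'.
Qed.


Lemma vstep st e : basic st -> 0 < e ->
  exists st', [/\ basic st', snext st st' & meshV st' e].
Proof.
have [[[cpt _ zd] [cE _ _]] _ H2 H3] := HF.
case: st => C EC Psi D ED iota phi.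
move=> [/= gC cPsi gD cphi [iinj EDiff cV]] e0.
have [d2 d20 hd2] := lebesgue_fin cpt (proj1 cPsi).
have m0 : 0 < Num.min d2 e by rewrite lt_min d20 e0.
have [C3 [E3 [k [gC3 ck mk]]]] := H3 _ m0.
have [_ [[kE ks _] _]] := ck.
have [pre hpre] := choice ks.
pose r c := Psi (pre c).
have Psir t : Psi t = r (k t).
  rewrite /r; apply: hd2; apply: (le_ball (e1 := Num.min d2 e)); first by rewrite ge_min lexx.
  by apply: (mk (k t)) => //; rewrite hpre.
have rconf : fconf E3 EC r.
  apply: (factor_confluent (k := k) (Psi := Psi)) => //.
  - exact: (proj2 ck).
  - exact: (proj2 cPsi).
  - by move=> W _; apply: cont_fin_closed; exact: (proj1 ck).
have [VS cVc mV] := cV.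
have [d0 _ hd0] := VS _ Vx0.
have rc0 : r (k x0) = iota d0 by rewrite -Psir hd0.
have rhoconf := rho_conf iinj EDiff rconf gD gC3 gC rc0.
have gDK := DK_graph gC3 rc0.
have [phi3 [cphi3 phiE]] := H2 _ _ _ _ gD gDK phi (rho d0) cphi rhoconf.
exists (Stage E3 k (EK (E3:=E3) (i2:=iota) (r:=r) (c0:=k x0)) val phi3); split.
- split => //=; split => //=.
  + exact: val_inj.
  + rewrite val_image_Kc.
    have kV : k @` V `<=` Kc E3 iota r (k x0).
      apply: (gcomponent_meet (cKc E3 rc0)).
      * move=> _ [v Vv <-]; have [d _ hd] := VS _ Vv; exists d => //; by rewrite hd Psir.
      * apply: (conn_image (clo := closed) (E := E)) => //.
        by move=> W _; apply: cont_fin_closed; exact: (proj1 ck).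
      * by exists (k x0); split; [exists x0 | apply: comp_self; exists d0].
    split.
    * by move=> v Vv; apply: kV; exists v.
    * exact: cVc.
    * move=> W VW WK cW; apply: mV => // w /WK /Kc_sub [d hd].
      by exists d => //; rewrite Psir.
- exists r; split => t; first exact: Psir.
  by rewrite phiE /= i2rho.
- move=> p q kpq Vp Vq; apply: (le_ball (e1 := Num.min d2 e)); first by rewrite ge_min lexx orbT.
  exact: (mk (k p)).
Qed.

End Main.

Arguments sEC {R T} s _ _.
Arguments sED {R T} s _ _.
Arguments siota {R T} s _.
Arguments sphi {R T} s _.
Arguments sPsi {R T} s _.

Section Lim.
Context {R : realType} {T : pseudoMetricType R} (E : T -> T -> Prop).
Hypothesis HF : is_Fraisse_limit E.
Context (V : set T).

Definition eps (n : nat) : R := (n.+1%:R)^-1.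

Lemma eps_gt0 n : 0 < eps n.
Proof. by rewrite /eps invr_gt0 ltr0n. Qed.

Lemma basic_range st : basic E V st ->
  gconnected (@fin_closed _) (fun a b => sEC st a b) (range (siota st)).
Proof.
move=> [gC cPsi gD cphi [iinj EDiff cV]].
apply: (conn_image (clo := @fin_closed _) (E := fun a b => sED st a b)) => //.
- by move=> u v; rewrite EDiff.
- by case: gD.
Qed.

Lemma basic_onto st : basic E V st -> sPsi st @` V = range (siota st).
Proof.
move=> bst; have [gC cPsi gD cphi [iinj EDiff cV]] := bst.
exact: (proj2 (proj2 cPsi)) _ (basic_range bst) _ cV.
Qed.

Lemma basic_lift st a b : basic E V st -> sED st a b ->
  exists u v, [/\ V u, V v, E u v, sPsi st u = siota st a & sPsi st v = siota st b].
Proof.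
have [[_ [_ Erefl _]] _ _ _] := HF.
move=> bst; have [gC cPsi gD cphi [iinj EDiff cV]] := bst.
rewrite EDiff => Eab.
have [_ _ syC _] := gC.
have sym' : forall c d, sEC st c d -> sEC st d c by move=> c d; rewrite syC.
have hclo : forall Z, closed (sPsi st @^-1` Z).
  by move=> Z; apply: cont_fin_closed; exact: (proj1 cPsi).
have [u [v [Vu Vv Euv hu hv]]] := edge_lift_comp (proj2 cPsi) hclo Erefl sym'
  (basic_range bst) cV (ex_intro2 _ _ a I erefl) (ex_intro2 _ _ b I erefl) Eab.
by exists u, v.
Qed.

Lemma basic_closedV st : basic E V st -> closed V.
Proof.
move=> [gC cPsi gD cphi [iinj EDiff cV]].
apply: (gcomponent_closed _ cV); apply: cont_fin_closed; exact: (proj1 cPsi).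
Qed.


Lemma limit_iso (sq : nat -> stage) :
  (forall n, basic E V (sq n)) -> (forall n, snext (sq n) (sq n.+1)) ->
  (forall n, meshV V (sq n.+1) (eps n)) -> (forall n, meshT (sq n.+1) (eps n)) ->
  iso_onto_subgraph E V.
Proof.
move=> Hb Hn HmV HmT.
have [[[cpt _ zd] [cE Erefl Esym]] _ _ _] := HF.
have cV := basic_closedV (Hb 0%N).
pose S n t := V `&` (sPsi (sq n) @^-1` [set siota (sq n) (sphi (sq n) t)]).
have Spsi n t y : S n t y -> sPsi (sq n) y = siota (sq n) (sphi (sq n) t) by case.
have SV n t y : S n t y -> V y by case.
have Sdec n t : S n.+1 t `<=` S n t.
  move=> y [Vy hy]; split => //=; have [r [h1 h2]] := Hn n.
  by rewrite h1 /= hy -h2.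
have Sne n t : S n t !=set0.
  have : (sPsi (sq n) @` V) (siota (sq n) (sphi (sq n) t)).
    by rewrite basic_onto //; exists (sphi (sq n) t).
  by case=> y Vy hy; exists y.
have Scl n t : closed (S n t).
  apply: closedI => //; apply: cont_fin_closed.
  by have [_ cPsi _ _ _] := Hb n; exact: (proj1 cPsi).
have Suniq t y y' : (forall n, S n t y) -> (forall n, S n t y') -> y = y'.
  move=> hy hy'; apply: (sep_ball zd) => e e0; have [n hn] := eps_small e0.
  apply: (le_ball (e1 := eps n)); first exact: ltW.
  apply: HmV; [ | exact: SV (hy n.+1) | exact: SV (hy' n.+1)].
  by rewrite (Spsi _ _ _ (hy n.+1)) (Spsi _ _ _ (hy' n.+1)).
have hex : forall t, exists y, forall n, S n t y.
  move=> t; exact: nested_inter cpt (fun n => Scl n t) (fun n => Sne n t) (fun n => Sdec n t).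
have [h hh] := choice hex.
have img : h @` setT = V.
  apply/seteqP; split; first by move=> _ [t _ <-]; exact: SV (hh t 0%N).
  move=> v Vv.
  pose Rs n := sphi (sq n) @^-1` [set d | siota (sq n) d = sPsi (sq n) v].
  have Rcl n : closed (Rs n).
    apply: cont_fin_closed.
    by have [_ _ _ cphi _] := Hb n; exact: (proj1 cphi).
  have Rne n : Rs n !=set0.
    have [_ _ _ cphi [_ _ cVn]] := Hb n.
    have [VS _ _] := cVn.
    have [d _ hd] := VS _ Vv.
    have [_ [[_ phs _] _]] := cphi.
    by have [t ht] := phs d; exists t; rewrite /Rs /= ht.
  have Rdec n : Rs n.+1 `<=` Rs n.
    move=> t ht; have [r [h1 h2]] := Hn n.
    by rewrite /Rs /= h2 ht -h1.
  have [t ht] := nested_inter cpt Rcl Rne Rdec.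
  exists t => //; apply: (Suniq t) => n; first exact: hh.
  by split => //; exact: esym (ht n).
exists h; split => //.
- move=> t; apply/cvg_ballP => e e0.
  have [n hn] := eps_small e0.
  have [_ _ _ cphi _] := Hb n.+1.
  have nb : nbhs t (sphi (sq n.+1) @^-1` [set sphi (sq n.+1) t]).
    apply: open_nbhs_nbhs; split => //.
    by apply: cont_fin_open; exact: (proj1 cphi).
  apply: filterS nb => t' ht'.
  apply: (le_ball (e1 := eps n)); first exact: ltW.
  apply: HmV; [ | exact: SV (hh t n.+1) | exact: SV (hh t' n.+1)].
  by rewrite (Spsi _ _ _ (hh t n.+1)) (Spsi _ _ _ (hh t' n.+1)) ht'.
- move=> t t' htt'; apply: (sep_ball zd) => e e0; have [n hn] := eps_small e0.
  apply: (le_ball (e1 := eps n)); first exact: ltW.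
  apply: HmT; have [_ _ _ _ [iinj _ _]] := Hb n.+1; apply: iinj.
  by rewrite -(Spsi _ _ _ (hh t n.+1)) -(Spsi _ _ _ (hh t' n.+1)) htt'.
- move=> u v Euv; apply: (closed_edge_lim cE) => e e0.
  have [n hn] := eps_small e0.
  have [_ _ _ cphi _] := Hb n.+1.
  have [_ [[phE _ _] _]] := cphi.
  have [a [b [Va Vb Eab ha hb]]] := basic_lift (Hb n.+1) (phE _ _ Euv).
  exists a, b; split => //; apply: (le_ball (e1 := eps n)); try exact: ltW.
  + apply: HmV => //; [ | exact: SV (hh u n.+1)].
    by rewrite (Spsi _ _ _ (hh u n.+1)) ha.
  + apply: HmV => //; [ | exact: SV (hh v n.+1)].
    by rewrite (Spsi _ _ _ (hh v n.+1)) hb.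
- move=> a b Va Vb Eab.
  have : (h @` setT) a by rewrite img.
  case=> t _ hta.
  have : (h @` setT) b by rewrite img.
  case=> t' _ htb.
  exists t, t'; split => //.
  apply: (closed_edge_lim cE) => e e0.
  have [n hn] := eps_small e0.
  have [_ cPsi _ cphi [_ EDiff _]] := Hb n.+1.
  have [_ [[psE _ _] _]] := cPsi.
  have [_ [[_ _ phES] _]] := cphi.
  have := psE _ _ Eab.
  rewrite -hta -htb (Spsi _ _ _ (hh t n.+1)) (Spsi _ _ _ (hh t' n.+1)) -EDiff.
  move=> /phES [u [v [Euv hu hv]]].
  exists u, v; split => //; apply: (le_ball (e1 := eps n)); try exact: ltW.
  + by apply: HmT; rewrite hu.
  + by apply: HmT; rewrite hv.
Qed.

End Lim.

Lemma seq_exists {R : realType} {T : pseudoMetricType R} (E : T -> T -> Prop)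
  (HF : is_Fraisse_limit E) (V : set T) (x0 : T) (Vx0 : V x0) (st0 : stage) :
  basic E V st0 -> exists sq : nat -> stage,
  [/\ forall n, basic E V (sq n), forall n, snext (sq n) (sq n.+1),
      forall n, meshV V (sq n.+1) (eps n) & forall n, meshT (sq n.+1) (eps n)].
Proof.
move=> b0.
have step : forall p : stage * nat, exists st', basic E V p.1 ->
    [/\ basic E V st', snext p.1 st', meshV V st' (eps p.2) & meshT st' (eps p.2)].
  move=> [st n]; have [b|nb] := pselect (basic E V st); last by exists st.
  have [st1 [b1 n1 m1]] := tstep HF b (eps_gt0 n).
  have [st2 [b2 n2 m2]] := vstep HF Vx0 b1 (eps_gt0 n).
  exists st2 => _; split => //.
  - move: n1 n2 => [r1 [h1 k1]] [r2 [h2 k2]].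
    exists (fun c => r1 (r2 c)); split => t; [by rewrite h1 h2 | by rewrite k1 k2].
  - exact: next_meshT b1 n2 m1.
have [F hF] := choice step.
pose sq := fix sq n := if n is n'.+1 then F (sq n', n') else st0.
have hb : forall n, basic E V (sq n).
  by elim => [|n IH] //=; have [] := hF (sq n, n) IH.
exists sq; split => n; by have [] := hF (sq n, n) (hb n).
Qed.

Theorem mainTheorem12 (R : realType) (T : pseudoMetricType R)
  (E : T -> T -> Prop) :
  is_Fraisse_limit E ->
  forall (x : T) (U : set T), nbhs x U ->
  exists V : set T, [/\ closed V, V x, V `<=` U & iso_onto_subgraph E V].
Proof.
move=> HF x U /nbhs_ballP [e0 e00 hU].
have [[[cpt sc zd] [cE Erefl Esym]] H1 H2 H3] := HF.
have [A [EA [f [gA cf mf]]]] := H3 _ e00.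
have Sx : (f @^-1` [set f x]) x by [].
pose V := gcomp closed E (f @^-1` [set f x]) x.
have cV : gcomponent closed E (f @^-1` [set f x]) V := comp_gcomponent closed E Sx.
have Vx : V x := comp_self closed E Sx.
have VU : V `<=` U.
  move=> v Vv; apply: hU; apply: (mf (f x)) => //; exact: comp_sub Vv.
pose st0 := Stage EA f (fun _ _ : unit => true) (fun _ : unit => f x) (fun _ : T => tt).
have b0 : basic E V st0.
  split => //=.
  - split => //; first by rewrite card_unit.
    move=> /gdiscP [P [Q [[_ PQ0 _ _ _] [[] Pt] [[] Qt]]]].
    by have : (P `&` Q) tt by []; rewrite PQ0.
  - split.
      move=> [].
      have -> : (fun _ : T => tt) @^-1` [set tt] = setT by apply/seteqP; split.
      exact: openT.
    split; first split.
    + by [].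
    + by move=> []; exists x.
    + by move=> [] [] _; exists x, x; split.
    + move=> Q cQ C cC; have [CS _ _] := cC.
      have [Qt|nQt] := pselect (Q tt).
        have [c Cc] := gcomponent_nonempty cC (z := x) Qt.
        by apply/seteqP; split => [[] _ //| [] _]; exists c.
      apply/seteqP; split => [[] [c Cc _] | [] /nQt //].
      exact: CS _ Cc.
  - split.
    + by move=> [] [].
    + by move=> [] []; have [_ rf _ _] := gA; rewrite rf.
    + have -> : f @^-1` range (fun _ : unit => f x) = f @^-1` [set f x]; last exact: cV.
      by apply/seteqP; split => t /= [] //; exists tt.
have [sq [Hb Hn HmV HmT]] := seq_exists HF Vx b0.
exists V; split => //.
- exact: basic_closedV b0.
- exact: (@limit_iso R T E HF V sq Hb Hn HmV HmT).
Qed.
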